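(* Let $\tau\in(0,1)$, $(\beta,\gamma,\kappa,\upsilon,C_S,C_{\mathrm{App}})\in(0,1]\times(0,\infty)^2\times(0,1)\times[1,\infty)^2$. Let $P\in\mathcal P_{\mathrm{H\ddot ol}}(\beta,C_S)\cap\mathcal P_{\mathrm{App}}(\mathcal A_{\mathrm{rect}},\tau,\kappa,\gamma,C_{\mathrm{App}})$ be a distribution on $\mathbb R^d\times[0,1]$ with regression function $\eta$ and Lebesgue absolutely continuous marginal $\mu$ having a continuous density $f_\mu$. Suppose $\mathcal X_\tau(\eta)\subseteq\mathcal R_\upsilon(\mu)$, $\mu(\eta^{-1}((\tau,1]))>0$ and $\eta^{-1}(\{\tau\})\neq\emptyset$. Then $\beta\gamma(\kappa-1)\le d\kappa$.
   Context: $\eta(x)=\mathbb E(Y\mid X=x)$; $\mathcal X_c(f):=\{x:f(x)\ge c\}$; $\bar B_\infty,B_\infty$: closed/open sup-norm balls. $\mathcal P_{\mathrm{H\ddot ol}}(\beta,C_S)$ (for $\beta\in(0,1]$): $|\eta(x')-\eta(x)|\le C_S\|x'-x\|^\beta_\infty$ for all $x,x'$. $M_\tau:=\sup\{\mu(A):A\in\mathcal A_{\mathrm{rect}},A\subseteq\mathcal X_\tau(\eta)\}$, with $\mathcal A_{\mathrm{rect}}$ the compact axis-aligned hyper-rectangles. Lower density $\omega(x):=\inf_{r\in(0,1)}\mu(\bar B_\infty(x,r))/r^d$. $\mathcal P_{\mathrm{App}}(\mathcal A_{\mathrm{rect}},\tau,\kappa,\gamma,C_{\mathrm{App}})$: $\sup\{\mu(A):A\in\mathcal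 A_{\mathrm{rect}},A\subseteq\mathcal X_\xi(\omega)\cap\mathcal X_{\tau+\Delta}(\eta)\}\ge M_\tau-C_{\mathrm{App}}(\xi^\kappa+\Delta^\gamma)$ for all $\xi,\Delta>0$. $\mathcal R_\upsilon(\mu):=\bigcap_{r\in(0,1)}\{x:\mu(B_\infty(x,r))\ge\upsilon r^d\sup_{x'\in B_\infty(x,(1+\upsilon)r)}f_\mu(x')\}$. *)

(* Defs.v *)
From HB Require Import structures.
From mathcomp Require Import all_boot all_order all_algebra.
From mathcomp Require Import all_classical all_reals all_analysis.
Set Implicit Arguments. Unset Strict Implicit. Unset Printing Implicit Defensive.
Import Order.TTheory GRing.Theory Num.Theory.
Import numFieldNormedType.Exports.
Local Open Scope classical_set_scope.
Local Open Scope ring_scope.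

Section Defs.
Variable R : realType.

Definition supnorm (d : nat) (x : 'rV[R]_d) : R :=
  \big[Num.max/0]_(i < d) `|x ord0 i|.

Definition cball (d : nat) (x : 'rV[R]_d) (r : R) : set 'rV[R]_d :=
  [set y | supnorm (y - x) <= r].
Definition oball (d : nat) (x : 'rV[R]_d) (r : R) : set 'rV[R]_d :=
  [set y | supnorm (y - x) < r].

Definition is_rect (d : nat) (A : set 'rV[R]_d) : Prop :=
  exists a b : 'rV[R]_d, A = [set x | forall i, a ord0 i <= x ord0 i <= b ord0 i].

(* ---------- d-dimensional Lebesgue integral (iterated, Tonelli) ---------- *)
Definition scons (t : R) (x : nat -> R) : nat -> R :=
  fun i => if i is j.+1 then x j else t.

Fixpoint iint (n : nat) (g : (nat -> R) -> \bar R) : \bar R :=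
  match n with
  | 0 => g (fun _ => 0)
  | n'.+1 => (\int[lebesgue_measure]_t iint n' (fun x => g (scons t x)))%E
  end.

Definition leb_int (d : nat) (h : 'rV[R]_d -> \bar R) : \bar R :=
  iint d (fun x => h (\row_(i < d) x (nat_of_ord i))).

Definition dmeasure (d : nat) (f : 'rV[R]_d -> R) (A : set 'rV[R]_d) : \bar R :=
  leb_int (fun x => ((f x)%:E * (\1_A x)%:E)%E).

Definition superlevel (d : nat) (g : 'rV[R]_d -> R) (c : R) : set 'rV[R]_d :=
  [set x | c <= g x].

Definition holder (d : nat) (eta : 'rV[R]_d -> R) (beta CS : R) : Prop :=
  forall x x', `|eta x' - eta x| <= CS * powR (supnorm (x' - x)) beta.

Definition Mtau (d : nat) (mu : set 'rV[R]_d -> \bar R) (eta : 'rV[R]_d -> R)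
  (tau : R) : \bar R :=
  ereal_sup [set mu A | A in [set A | is_rect A /\ A `<=` superlevel eta tau]].

Definition lower_density (d : nat) (mu : set 'rV[R]_d -> \bar R) (x : 'rV[R]_d)
  : \bar R :=
  ereal_inf [set (mu (cball x r) * ((r ^+ d)^-1)%:E)%E | r in [set r : R | 0 < r < 1]].

Definition approx_cond (d : nat) (mu : set 'rV[R]_d -> \bar R) (eta : 'rV[R]_d -> R)
  (tau kappa gamma CApp : R) : Prop :=
  forall xi Delta : R, 0 < xi -> 0 < Delta ->
    (ereal_sup [set mu A | A in [set A | is_rect A /\
        A `<=` ([set x | (xi%:E <= lower_density mu x)%E]
                `&` superlevel eta (tau + Delta))]]
     >= Mtau mu eta tau - (CApp * (powR xi kappa + powR Delta gamma))%:E)%E.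

Definition regular_set (d : nat) (mu : set 'rV[R]_d -> \bar R) (f : 'rV[R]_d -> R)
  (ups : R) : set 'rV[R]_d :=
  \bigcap_(r in [set r : R | 0 < r < 1])
    [set x | ((ups * r ^+ d)%:E *
               ereal_sup [set (f x')%:E | x' in oball x ((1 + ups) * r)]
             <= mu (oball x r))%E].

End Defs.

(* Main.v *)
Require Import Defs.
From HB Require Import structures.
From mathcomp Require Import all_boot all_order all_algebra.
From mathcomp Require Import all_classical all_reals all_analysis.
From mathcomp Require Import ring lra.
Import Order.TTheory GRing.Theory Num.Theory.
Import numFieldNormedType.Exports.
Local Open Scope classical_set_scope.
Local Open Scope ring_scope.

Section Aux.
Variable R : realType.
Local Open Scope ereal_scope.
Import HBNNSimple.

Notation leb := (@lebesgue_measure R).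

Lemma int_le (g1 g2 : R -> \bar R) : (forall t, 0 <= g1 t) -> (forall t, g1 t <= g2 t) ->
  \int[leb]_t g1 t <= \int[leb]_t g2 t.
Proof.
move=> g10 g12.
have g20 t : 0 <= g2 t by apply: le_trans (g12 t).
rewrite !ge0_integralTE//.
apply: ereal_sup_le => _ [h hg1 <-]; exists h => //= x.
exact: le_trans (g12 x).
Qed.

Lemma sup_superadd (X Y Z : set (\bar R)) :
  X !=set0 -> Y !=set0 -> (forall x, X x -> 0 <= x) -> (forall y, Y y -> 0 <= y) ->
  (forall x y, X x -> Y y -> x + y <= ereal_sup Z) ->
  ereal_sup X + ereal_sup Y <= ereal_sup Z.
Proof.
move=> [x0 Xx0] [y0 Yy0] X0 Y0 H.
have s0 : 0 <= ereal_sup Z by apply: le_trans (H _ _ Xx0 Yy0); apply: adde_ge0; auto.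
have supY0 : 0 <= ereal_sup Y by apply: le_trans (Y0 _ Yy0) _; exact: ereal_sup_ubound.
move: s0 H; case: (ereal_sup Z) => [s| |] s0 H; last by [].
  2: by rewrite leey.
have Xfin x : X x -> x \is a fin_num.
  move=> Xx; rewrite ge0_fin_numE ?X0//.
  exact: le_lt_trans (leeDl x (Y0 _ Yy0)) (le_lt_trans (H _ _ Xx Yy0) (ltry _)).
have Yb x : X x -> ereal_sup Y <= s%:E - x.
  move=> Xx; apply: ge_ereal_sup => y Yy; rewrite leeBrDl ?Xfin//; exact: H.
have supYfin : ereal_sup Y \is a fin_num.
  rewrite ge0_fin_numE//; apply: le_lt_trans (Yb _ Xx0) _.
  by rewrite -(fineK (Xfin _ Xx0)) -EFinB ltry.
rewrite -leeBrDr//; apply: ge_ereal_sup => x Xx.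
by rewrite leeBrDl// addeC -leeBrDl ?Xfin// Yb.
Qed.

Lemma int_superadd (g1 g2 : R -> \bar R) : (forall t, 0 <= g1 t) -> (forall t, 0 <= g2 t) ->
  \int[leb]_t g1 t + \int[leb]_t g2 t <= \int[leb]_t (g1 t + g2 t).
Proof.
move=> g10 g20.
rewrite !ge0_integralTE//; last by move=> t; apply: adde_ge0.
apply: sup_superadd.
- by exists (sintegral leb (@nnsfun0 _ _ R)), nnsfun0 => //= x; rewrite g10.
- by exists (sintegral leb (@nnsfun0 _ _ R)), nnsfun0 => //= x; rewrite g20.
- by move=> _ [h _ <-]; exact: sintegral_ge0.
- by move=> _ [h _ <-]; exact: sintegral_ge0.
move=> _ _ [h1 h1g <-] [h2 h2g <-].
rewrite -sintegralD; apply: ereal_sup_ubound; exists (add_nnsfun h1 h2) => //= x.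
by rewrite EFinD; apply: leeD.
Qed.


Lemma iint_ge0 n (g : (nat -> R) -> \bar R) : (forall x, 0 <= g x) -> 0 <= iint n g.
Proof.
elim: n g => [|n IH] g g0 /=; first exact: g0.
by apply: integral_ge0 => t _; apply: IH.
Qed.

Lemma iint_le n (g1 g2 : (nat -> R) -> \bar R) : (forall x, 0 <= g1 x) ->
  (forall x, g1 x <= g2 x) -> iint n g1 <= iint n g2.
Proof.
elim: n g1 g2 => [|n IH] g1 g2 g10 g12 /=; first exact: g12.
apply: int_le => t; first by apply: iint_ge0.
by apply: IH.
Qed.

Lemma iint_superadd n (g1 g2 : (nat -> R) -> \bar R) : (forall x, 0 <= g1 x) ->
  (forall x, 0 <= g2 x) -> iint n g1 + iint n g2 <= iint n (fun x => g1 x + g2 x).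
Proof.
elim: n g1 g2 => [|n IH] g1 g2 g10 g20 /=; first by [].
apply: le_trans; first by apply: int_superadd => t; apply: iint_ge0.
apply: int_le => t; first by apply: adde_ge0; apply: iint_ge0.
exact: IH.
Qed.

Lemma iint_zero n (g : (nat -> R) -> \bar R) : (forall x, g x = 0) -> iint n g = 0.
Proof.
elim: n g => [|n IH] g g0 /=; first exact: g0.
by apply: integral0_eq => t _; apply: IH.
Qed.

Definition ind (a b t : R) : R := \1_(`[a, b]%classic) t.

Lemma int_ind (k a b : R) : (0 <= k)%R -> (a <= b)%R ->
  \int[leb]_t (k * ind a b t)%:E = (k * (b - a))%:E.
Proof.
move=> k0 ab; rewrite /ind.
have := @integralZl_indic _ _ _ leb setT measurableT (fun=> `[a, b]%classic) k.
rewrite /= => ->; last 2 first.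
- by move=> k0'; exfalso; move: k0'; apply/negP; rewrite -leNgt.
- exact: measurable_itv.
rewrite integral_indic// setIT.
have := @lebesgue_measure_itv R `[a, b]; rewrite /= lte_fin => ->.
case: (ltP a b) => h.
- by rewrite -EFinB -EFinM.
- have -> : b = a by apply/le_anti; rewrite h ab.
  by rewrite subrr mulr0 mule0.
Qed.

Lemma iint_cube n (a b : nat -> R) (s : R) : (0 <= s)%R -> (forall i, a i <= b i)%R ->
  iint n (fun x => (s * \prod_(i < n) ind (a i) (b i) (x i))%:E) =
  (s * \prod_(i < n) (b i - a i))%:E.
Proof.
elim: n a b s => [|n IH] a b s s0 ab /=; first by rewrite !big_ord0.
transitivity (\int[leb]_t ((s * \prod_(i < n) (b i.+1 - a i.+1)) * ind (a 0%N) (b 0%N) t)%:E).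
  apply: eq_integral => t _.
  under eq_fun => x.
    rewrite big_ord_recl /= mulrA.
    over.
  rewrite (IH (fun i => a i.+1) (fun i => b i.+1)); last 2 first.
  - by rewrite mulr_ge0// /ind indicE; case: (_ \in _).
  - by move=> i; apply: ab.
  congr (_%:E); rewrite /=; ring.
rewrite int_ind ?ab//; last first.
  by apply: mulr_ge0 => //; apply: prodr_ge0 => i _; rewrite subr_ge0; exact: ab.
rewrite big_ord_recl /=; congr (_%:E); ring.
Qed.


Lemma supnorm_ge0 d (x : 'rV[R]_d) : (0 <= supnorm x)%R.
Proof. exact: bigmax_ge_id. Qed.

Lemma supnorm_leP d (x : 'rV[R]_d) r : (0 <= r)%R ->
  (supnorm x <= r)%R <-> (forall i, `|x ord0 i| <= r)%R.
Proof.
move=> r0; split.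
  by move=> /bigmax_leP [_ H] i; apply: H.
by move=> H; apply/bigmax_leP; split.
Qed.

Lemma supnorm_ltP d (x : 'rV[R]_d) r : (0 < r)%R ->
  (supnorm x < r)%R <-> (forall i, `|x ord0 i| < r)%R.
Proof.
move=> r0; split.
  by move=> /bigmax_ltP [_ H] i; apply: H.
by move=> H; apply/bigmax_ltP; split.
Qed.

Arguments supnorm_leP {d x r}.
Arguments supnorm_ltP {d x r}.

Lemma dmeasure_le d (f : 'rV[R]_d -> R) (A B : set 'rV[R]_d) :
  (forall x, 0 <= f x)%R -> A `<=` B -> dmeasure f A <= dmeasure f B.
Proof.
move=> f0 AB; rewrite /dmeasure /leb_int; apply: iint_le => x.
  by apply: mule_ge0; rewrite lee_fin.
rewrite -!EFinM lee_fin; apply: ler_wpM2l => //.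
rewrite !indicE; case: (boolP (_ \in A)) => xA; last by case: (_ \in B).
by rewrite mem_set //; apply: AB; move: xA; rewrite inE.
Qed.

Lemma dmeasure_add d (f : 'rV[R]_d -> R) (A Q B : set 'rV[R]_d) :
  (forall x, 0 <= f x)%R -> A `<=` B -> Q `<=` B -> A `&` Q = set0 ->
  dmeasure f A + dmeasure f Q <= dmeasure f B.
Proof.
move=> f0 AB QB AQ; rewrite /dmeasure /leb_int.
apply: le_trans; first by apply: iint_superadd => x; apply: mule_ge0; rewrite lee_fin.
apply: iint_le => x.
  by apply: adde_ge0; apply: mule_ge0; rewrite lee_fin.
rewrite -!EFinM -EFinD lee_fin -mulrDr; apply: ler_wpM2l => //.
set y := (\row_(i < d) x i).
rewrite !indicE; case: (boolP (y \in A)) => yA.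
  have yB : y \in B by rewrite mem_set //; apply: AB; move: yA; rewrite inE.
  have yQ : y \notin Q.
    apply/negP => yQ; have : (A `&` Q) y by split; rewrite -inE.
    by rewrite AQ.
  by rewrite yB (negbTE yQ) addr0.
case: (boolP (y \in Q)) => yQ.
  have yB : y \in B by rewrite mem_set //; apply: QB; move: yQ; rewrite inE.
  by rewrite yB add0r.
by rewrite addr0; case: (_ \in B).
Qed.

Lemma dmeasure_zero d (f : 'rV[R]_d -> R) (A : set 'rV[R]_d) :
  (forall x, A x -> f x = 0%R) -> dmeasure f A = 0.
Proof.
move=> H; rewrite /dmeasure /leb_int; apply: iint_zero => x.
rewrite indicE; case: (boolP (_ \in A)) => xA; last by rewrite mule0.
by rewrite H ?mul0e //; move: xA; rewrite inE.
Qed.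

Definition coordf d (z : 'rV[R]_d) (i : nat) : R :=
  match (insub i : option 'I_d) with Some j => z ord0 j | None => 0%R end.

Arguments coordf {d}.

Lemma coordfE d (z : 'rV[R]_d) (j : 'I_d) : coordf z j = z ord0 j.
Proof. by rewrite /coordf valK. Qed.

Lemma dmeasure_cball_le d (f : 'rV[R]_d -> R) (z : 'rV[R]_d) (r s : R) :
  (forall x, 0 <= f x)%R -> (0 <= r)%R -> (forall x, cball z r x -> f x <= s)%R ->
  dmeasure f (cball z r) <= (s * (r *+ 2) ^+ d)%:E.
Proof.
move=> f0 r0 fs.
have s0 : (0 <= s)%R.
  apply: le_trans (f0 z) (fs _ _); rewrite /cball /= subrr.
  by apply/supnorm_leP => // i; rewrite mxE normr0.
rewrite /dmeasure /leb_int.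
have -> : ((r *+ 2) ^+ d = \prod_(i < d) ((coordf z i + r) - (coordf z i - r)))%R.
  rewrite (eq_bigr (fun=> r *+ 2)%R) ?prodr_const ?card_ord // => i _.
  rewrite mulr2n; ring.
rewrite -(iint_cube d (fun i => coordf z i - r)%R (fun i => coordf z i + r)%R s s0); last first.
  by move=> i; lra.
apply: iint_le => x.
  by apply: mule_ge0; rewrite lee_fin.
rewrite -!EFinM lee_fin.
set y := (\row_(i < d) x i).
rewrite indicE; case: (boolP (y \in cball z r)) => yc; last first.
  rewrite mulr0; apply: mulr_ge0 => //; apply: prodr_ge0 => i _.
  by rewrite /ind indicE; case: (_ \in _).
have yc' : cball z r y by move: yc; rewrite inE.
rewrite mulr1; rewrite -[f y]mulr1.
have -> : (\prod_(i < d) ind (coordf z i - r) (coordf z i + r) (x i) = 1)%R.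
  apply: big1 => i _; rewrite /ind indicE mem_set //=.
  move: yc'; rewrite /cball /= => /(supnorm_leP r0) /(_ i).
  rewrite !mxE coordfE ler_norml => /andP[h1 h2].
  by rewrite in_itv /=; apply/andP; split; lra.
by rewrite mulr1 mulr1 fs.
Qed.

End Aux.

Arguments supnorm_ge0 {R d}.
Arguments supnorm_leP {R d x r}.
Arguments supnorm_ltP {R d x r}.
Arguments dmeasure_le {R d f A B}.
Arguments dmeasure_add {R d f A Q B}.
Arguments dmeasure_zero {R d f A}.
Arguments dmeasure_cball_le {R d f z r s}.
Arguments iint_ge0 {R n g}.

Lemma holder_close (R : realType) d (eta : 'rV[R]_d -> R) beta CS (p x : 'rV[R]_d) rho :
  holder eta beta CS -> 0 < beta -> 0 <= CS -> supnorm (x - p) <= rho ->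
  eta p - CS * powR rho beta <= eta x.
Proof.
move=> hold b0 CS0 hx.
have := hold p x; rewrite ler_norml => /andP[h1 _].
have : CS * powR (supnorm (x - p)) beta <= CS * powR rho beta.
  apply: ler_wpM2l => //; apply: ge0_ler_powR => //; first exact: ltW.
  - by rewrite nnegrE supnorm_ge0.
  - by rewrite nnegrE; apply: le_trans hx; exact: supnorm_ge0.
lra.
Qed.

Lemma cball_rect (R : realType) d (z : 'rV[R]_d) r : 0 <= r -> is_rect (cball z r).
Proof.
move=> r0; exists (\row_i (z ord0 i - r)), (\row_i (z ord0 i + r)).
apply/seteqP; split => x; rewrite /cball /=.
  move=> /(supnorm_leP r0) H i; have := H i; rewrite !mxE ler_norml => /andP[h1 h2].
  apply/andP; split; lra.
move=> H; apply/(supnorm_leP r0) => i; have := H i; rewrite !mxE => /andP[h1 h2].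
rewrite ler_norml; apply/andP; split; lra.
Qed.

Lemma clamp_prop (R : realType) (a b x rho : R) : 0 <= rho -> a <= b -> a - rho <= x <= b + rho ->
  a <= Num.min (Num.max x a) b <= b /\ `|x - Num.min (Num.max x a) b| <= rho.
Proof.
move=> r0 ab /andP[h1 h2].
rewrite maxEle minEle; case: (leP x a) => xa.
  rewrite ab lexx ab /=; split => //; rewrite ler_norml; apply/andP; split; lra.
case: (leP x b) => xb /=.
  by rewrite (ltW xa) xb; split => //; rewrite subrr normr0.
rewrite ab lexx; split => //; rewrite ler_norml; apply/andP; split; lra.
Qed.

Lemma half_lt (R : realType) (x : R) : 0 < x -> x / 2 < x.
Proof. move=> h; lra. Qed.

Section RH.
Variable R : realType.
Lemma h_qsub (a b x rho : R) : a <= b -> 0 < rho -> `|x - (b + rho / 2)| < rho / 2 -> a - rho <= x <= b + rho.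
Proof. rewrite ltr_norml => ab r0 /andP[h1 h2]; apply/andP; split; lra. Qed.
Lemma h_qdisj (b x rho : R) : `|x - (b + rho / 2)| < rho / 2 -> b < x.
Proof. rewrite ltr_norml => /andP[h1 h2]; lra. Qed.
Lemma h_ysub (a b rho : R) : a <= b -> 0 < rho -> a - rho <= b + rho / 2 <= b + rho.
Proof. move=> ab r0; apply/andP; split; lra. Qed.
Lemma h_Asub (a b x rho : R) : 0 < rho -> a <= x <= b -> a - rho <= x <= b + rho.
Proof. move=> r0 /andP[h1 h2]; apply/andP; split; lra. Qed.
Lemma h_cb (b x rho u : R) : 0 < u -> 0 < rho -> `|x - b| <= u * rho / 4 ->
  `|x - (b + rho / 2)| < (1 + u) * (rho / 2).
Proof.
move=> u0 r0; rewrite ler_norml ltr_norml => /andP[h1 h2].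
have h3 : 0 < u * rho by rewrite mulr_gt0.
apply/andP; split; lra.
Qed.
Lemma h_bin (b rho u : R) : 0 < u -> 0 < rho -> `|b - (b + rho / 2)| < (1 + u) * (rho / 2).
Proof.
move=> u0 r0; rewrite ltr_norml.
have h3 : 0 < u * rho by rewrite mulr_gt0.
apply/andP; split; lra.
Qed.
Lemma h_half (rho : R) : rho <= 1 -> rho / 2 < 1.
Proof. move=> *; lra. Qed.
Lemma h_r0 (u rho : R) : 0 < u < 1 -> 0 < rho <= 1 -> u * rho / 4 < 1.
Proof. move=> /andP[u0 u1] /andP[r0 r1]; have : u * rho <= 1 * 1 by apply: ler_pM; lra. lra. Qed.
Lemma h_final (Mr m' vA vQ vP L : R) : Mr - m' < vA -> L <= vQ -> vA + vQ <= vP -> vP <= Mr -> m' <= L -> False.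
Proof. move=> *; lra. Qed.
End RH.
Arguments h_qsub {R a b x rho}.
Arguments h_qdisj {R b x rho}.
Arguments h_ysub {R a b rho}.
Arguments h_Asub {R a b x rho}.
Arguments h_cb {R b x rho u}.
Arguments h_bin {R b rho u}.
Arguments h_half {R rho}.
Arguments h_r0 {R u rho}.
Arguments h_final {R Mr m' vA vQ vP L}.

Theorem mainTheorem18 (R : realType) (d : nat)
  (tau beta gamma kappa ups CS CApp : R)
  (f : 'rV[R]_d -> R) (eta : 'rV[R]_d -> R) :
  0 < tau < 1 ->
  0 < beta <= 1 -> 0 < gamma -> 0 < kappa -> 0 < ups < 1 ->
  1 <= CS -> 1 <= CApp ->
  (* marginal mu: Lebesgue absolutely continuous probability with continuous density f *)
  continuous f -> (forall x, 0 <= f x) -> dmeasure f setT = 1%E ->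
  (* eta: regression function of a distribution on R^d x [0,1] *)
  (forall x, 0 <= eta x <= 1) ->
  holder eta beta CS ->
  approx_cond (dmeasure f) eta tau kappa gamma CApp ->
  superlevel eta tau `<=` regular_set (dmeasure f) f ups ->
  (0 < dmeasure f [set x | (tau < eta x <= 1)%R])%E ->
  eta @^-1` [set tau] !=set0 ->
  beta * gamma * (kappa - 1) <= d%:R * kappa.
Proof.
move=> /andP[tau0 tau1] /andP[b0 b1] g0 k0 /andP[u0 u1] CS1 CA1.
case: d f eta => [|d] f eta fc f0 fT eta01 hold app reg pos [x0 ex0].
  exfalso; move: pos; rewrite dmeasure_zero ?ltxx // => x /= /andP[h _].
  have xx0 : x = x0 by rewrite (thinmx0 x) (thinmx0 x0).
  by move: h; rewrite xx0 ex0 ltxx.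
set n := d.+1.
set mu := dmeasure f.
have CS0 : 0 < CS by apply: lt_le_trans CS1.
have mu_le1 A : (mu A <= 1)%E by rewrite -fT; apply: dmeasure_le.
have mu_ge0 A : (0 <= mu A)%E.
  by apply: iint_ge0 => x; apply: mule_ge0; rewrite lee_fin.
have mu_fin A : mu A \is a fin_num.
  by rewrite ge0_fin_numE // (le_lt_trans (mu_le1 A)) ?ltry.
set M := Mtau mu eta tau.
have M_le1 : (M <= 1)%E by apply: ge_ereal_sup => _ [A _ <-]; apply: mu_le1.
have [x1 [x1tau fx1]] : exists x1, tau < eta x1 /\ 0 < f x1.
  apply: contrapT => H; move: pos; rewrite dmeasure_zero ?ltxx // => x /= /andP[h1 h2].
  have := f0 x; rewrite le_eqVlt => /orP[/eqP -> //|fx].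
  by exfalso; apply: H; exists x.
pose a1 := (eta x1 - tau) / CS.
have a10 : 0 < a1 by rewrite divr_gt0 // subr_gt0.
pose r1 := Num.min (1/2) (powR a1 (1/beta)).
have r10 : 0 < r1 by rewrite lt_min powR_gt0 // andbT; lra.
have r11 : r1 < 1 by rewrite gt_min; apply/orP; left; lra.
have r1a : CS * powR r1 beta <= eta x1 - tau.
  have h : powR r1 beta <= a1.
    apply: le_trans (_ : powR (powR a1 (1/beta)) beta <= a1).
      apply: ge0_ler_powR; [exact: ltW | by rewrite nnegrE ltW | by rewrite nnegrE powR_ge0 | by rewrite ge_min lexx orbT].
    by rewrite -powRrM mul1r mulVf ?gt_eqF // powRr1 // ltW.
  apply: le_trans (ler_wpM2l (ltW CS0) h) _.
  by rewrite /a1 mulrC divfK ?gt_eqF.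
have sub1 : cball x1 r1 `<=` superlevel eta tau.
  move=> x hx; rewrite /superlevel /=.
  have := @holder_close _ _ eta beta CS x1 x r1 hold b0 (ltW CS0) hx; lra.
have x1X : superlevel eta tau x1 by rewrite /superlevel /=; exact: ltW.
have reg1 : ((ups * r1 ^+ n)%:E * ereal_sup [set (f x')%:E | x' in oball x1 ((1 + ups) * r1)] <= mu (oball x1 r1))%E.
  by have := reg x1 x1X r1; apply; rewrite /= r10 r11.
have sup1 : ((f x1)%:E <= ereal_sup [set (f x')%:E | x' in oball x1 ((1 + ups) * r1)])%E.
  apply: ereal_sup_ubound; exists x1 => //; rewrite /oball /= subrr.
  apply/supnorm_ltP; first by rewrite mulr_gt0 //; lra.
  by move=> i; rewrite mxE normr0 mulr_gt0 //; lra.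
have M0 : (0 < M)%E.
  apply: (@lt_le_trans _ _ (mu (cball x1 r1))).
    apply: (@lt_le_trans _ _ (mu (oball x1 r1))); last first.
      by apply: dmeasure_le => // x; rewrite /oball /cball /=; exact: ltW.
    apply: lt_le_trans reg1; apply: (@lt_le_trans _ _ ((ups * r1 ^+ n)%:E * (f x1)%:E)%E).
      by rewrite -EFinM lte_fin !mulr_gt0 // exprn_gt0.
    apply: lee_pmul => //; rewrite lee_fin ?ltW //.
    by rewrite mulr_gt0 // exprn_gt0.
  by rewrite /M /Mtau; apply: ereal_sup_ubound; exists (cball x1 r1) => //; split => //; apply: cball_rect; exact: ltW.
have Mfin : M \is a fin_num.
  by rewrite ge0_fin_numE ?(ltW M0) // (le_lt_trans M_le1) ?ltry.
set Mr := fine M.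
have MrE : M = Mr%:E by rewrite /Mr fineK.
have Mr0 : 0 < Mr by rewrite -lte_fin -MrE.
rewrite leNgt; apply/negP => Hneg.
pose p := beta * gamma * kappa - beta * gamma - n%:R * kappa.
have p0 : 0 < p by rewrite /p; move: Hneg; rewrite mulrBr mulr1; lra.
pose K := CApp * (1 + powR CS gamma).
have K0 : 0 < K.
  by rewrite mulr_gt0 ?(lt_le_trans ltr01 CA1) // addr_gt0 // powR_gt0.
pose c := ups / 4 ^+ n.
have c0 : 0 < c by rewrite divr_gt0 // exprn_gt0.
pose m := Num.min c Mr.
have m0 : 0 < m by rewrite lt_min c0 Mr0.
pose t := Num.min (1/2) (powR (m / (2 * K)) (1/p)).
have t0 : 0 < t.
  rewrite lt_min; apply/andP; split; first lra.
  by apply: powR_gt0; rewrite divr_gt0 // mulr_gt0.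
have t1 : t <= 1/2 by rewrite ge_min lexx.
have t01 : 0 < t <= 1 by rewrite t0 /=; lra.
have tp : powR t p <= m / (2 * K).
  apply: le_trans (_ : powR (powR (m / (2 * K)) (1/p)) p <= _).
    apply: ge0_ler_powR; [exact: ltW | by rewrite nnegrE ltW | by rewrite nnegrE powR_ge0 | by rewrite ge_min lexx orbT].
  rewrite -powRrM mul1r mulVf ?gt_eqF // powRr1 // ltW // divr_gt0 // mulr_gt0 //.
have pow_le1 e : 0 <= e -> powR t e <= 1.
  by move=> e0; rewrite -[leRHS](powRr0 t); apply: ger_powR.
pose xi := powR t (beta * gamma).
pose rho := powR t kappa.
pose Delta := CS * powR rho beta.
have xi0 : 0 < xi by apply: powR_gt0.
have rho0 : 0 < rho by apply: powR_gt0.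
have rho1 : rho <= 1 by apply: pow_le1; exact: ltW.
have Delta0 : 0 < Delta by rewrite mulr_gt0 // powR_gt0.
pose e := beta * gamma + kappa * n%:R.
have e0 : 0 <= e by rewrite addr_ge0 // mulr_ge0 // ltW.
have E1 : CApp * (powR xi kappa + powR Delta gamma) = K * powR t (beta * gamma * kappa).
  rewrite /xi /Delta /rho -powRrM powRM ?powR_ge0 ?(ltW CS0) // -!powRrM.
  rewrite (_ : kappa * (beta * gamma) = beta * gamma * kappa); last by rewrite mulrC.
  rewrite /K; ring.
have E2 : powR t (beta * gamma * kappa) = powR t p * powR t e.
  rewrite -powRD; last by apply/implyP => _; rewrite gt_eqF.
  congr (powR t _); rewrite /p /e; ring.
pose L := ups * (rho / 2) ^+ n * (xi / 2 ^+ n).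
have E3 : L = c * powR t e.
  have rn : rho ^+ n = powR t (kappa * n%:R).
    by rewrite /rho powRrM powR_mulrn // powR_ge0.
  rewrite /L /c /e powRD; last by apply/implyP => _; rewrite gt_eqF.
  rewrite -rn /xi expr_div_n.
  rewrite (_ : (4:R) ^+ n = 2 ^+ n * 2 ^+ n); last by rewrite -exprMn; congr (_ ^+ _); ring.
  by field; rewrite expf_neq0.
pose B := K * powR t (beta * gamma * kappa).
have et0 : 0 < powR t e by apply: powR_gt0.
have Bm : B <= m / 2 * powR t e.
  rewrite /B E2 mulrA; apply: ler_wpM2r; first exact: powR_ge0.
  apply: le_trans (ler_wpM2l (ltW K0) tp) _.
  by rewrite le_eqVlt; apply/orP; left; apply/eqP; field; rewrite gt_eqF.
have mc : m <= c by rewrite ge_min lexx.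
have mM : m <= Mr by rewrite ge_min lexx orbT.
have BL : B < L.
  rewrite E3; apply: le_lt_trans Bm _.
  apply: (@lt_le_trans _ _ (m * powR t e)); last by apply: ler_wpM2r => //; exact: ltW.
  by rewrite ltr_pM2r // half_lt.
have BM : B < Mr.
  apply: le_lt_trans Bm _.
  apply: (@le_lt_trans _ _ (m / 2 * 1)).
    by apply: ler_wpM2l; [rewrite divr_ge0 // ltW | exact: pow_le1].
  by rewrite mulr1; apply: lt_le_trans mM; rewrite half_lt.
pose good := [set A | is_rect A /\ A `<=` ([set x | (xi%:E <= lower_density mu x)%E]
                `&` superlevel eta (tau + Delta))].
have app1 : ((Mr - B)%:E <= ereal_sup [set mu A | A in good])%E.
  by rewrite EFinB -MrE /B -E1; exact: (app xi Delta xi0 Delta0).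
pose m' := Num.min L Mr.
have Bm' : B < m' by rewrite lt_min BL BM.
have lt1 : ((Mr - m')%:E < ereal_sup [set mu A | A in good])%E.
  by apply: lt_le_trans app1; rewrite lte_fin ltrD2l ltrN2.
have [_ [A [[a [b ->]] Agood] <-] muA] := ereal_sup_gt lt1.
have [[w Aw]|H] := pselect (exists w : 'rV[R]_n, forall i : 'I_n, a ord0 i <= w ord0 i <= b ord0 i); last first.
  move: muA; rewrite /mu dmeasure_zero.
    by rewrite lte_fin subr_lt0 ltNge ge_min lexx orbT.
  by move=> x Ax; exfalso; apply: H; exists x.
have ab i : a ord0 i <= b ord0 i.
  by have /andP[h1 h2] := Aw i; exact: le_trans h2.
have bA : forall i : 'I_n, a ord0 i <= b ord0 i <= b ord0 i by move=> i; rewrite ab lexx.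
pose Aplus := [set x : 'rV[R]_n | forall i, a ord0 i - rho <= x ord0 i <= b ord0 i + rho].
have Aplus_rect : is_rect Aplus.
  exists (\row_i (a ord0 i - rho)), (\row_i (b ord0 i + rho)).
  by apply/seteqP; split => x /= H i; have := H i; rewrite !mxE.
have Aplus_sub : Aplus `<=` superlevel eta tau.
  move=> x Ax; rewrite /superlevel /=.
  pose q := \row_i Num.min (Num.max (x ord0 i) (a ord0 i)) (b ord0 i).
  have hq i := @clamp_prop R _ _ _ _ (ltW rho0) (ab i) (Ax i).
  have qA : forall i, a ord0 i <= q ord0 i <= b ord0 i.
    by move=> i; rewrite mxE; case: (hq i).
  have [_ qeta] := Agood q qA.
  have dq : supnorm (x - q) <= rho.
    by apply/(supnorm_leP (ltW rho0)) => i; rewrite !mxE; case: (hq i).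
  have := @holder_close _ _ eta beta CS q x rho hold b0 (ltW CS0) dq.
  move: qeta; rewrite /superlevel /= /Delta => h1 h2.
  by apply: le_trans _ h2; rewrite lerBrDr.
have muAplus : (mu Aplus <= M)%E.
  by rewrite /M /Mtau; apply: ereal_sup_ubound; exists Aplus.
have rh0 : 0 < rho / 2 by rewrite divr_gt0.
have rh1 : rho / 2 < 1 by apply: h_half.
pose y : 'rV[R]_n := \row_i (b ord0 i + rho / 2).
pose Q := oball y (rho / 2).
have Qsub : Q `<=` Aplus.
  move=> x /(supnorm_ltP rh0) Qx i; apply: (h_qsub (ab i) rho0).
  by have := Qx i; rewrite !mxE.
have AQ : [set x : 'rV[R]_n | forall i, a ord0 i <= x ord0 i <= b ord0 i] `&` Q = set0.
  apply/seteqP; split => x // [Ax /(supnorm_ltP rh0) Qx].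
  have := Qx ord0; rewrite !mxE => /h_qdisj.
  by have /andP[_ h] := Ax ord0; rewrite ltNge h.
have Asub : [set x : 'rV[R]_n | forall i, a ord0 i <= x ord0 i <= b ord0 i] `<=` Aplus.
  by move=> x Ax i; apply: h_Asub.
have yX : superlevel eta tau y.
  by apply: Aplus_sub => i; rewrite mxE; apply: h_ysub.
pose S := ereal_sup [set (f x')%:E | x' in oball y ((1 + ups) * (rho / 2))].
have regy : ((ups * (rho / 2) ^+ n)%:E * S <= mu Q)%E.
  by have := reg y yX (rho / 2); apply; rewrite /= rh0 rh1.
have [xiLD _] := Agood b bA.
pose r0 := ups * rho / 4.
have r00 : 0 < r0 by rewrite /r0 divr_gt0 // mulr_gt0.
have r01 : r0 < 1 by apply: h_r0; [rewrite u0 u1 | rewrite rho0 rho1].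
have ld_le : (lower_density mu b <= mu (cball b r0) * ((r0 ^+ n)^-1)%:E)%E.
  by apply: ereal_inf_lbound; exists r0 => //; apply/andP.
have cb_sub : cball b r0 `<=` oball y ((1 + ups) * (rho / 2)).
  move=> x /(supnorm_leP (ltW r00)) hx; apply/(supnorm_ltP _).
    by rewrite mulr_gt0 // addr_gt0.
  by move=> i; have := hx i; rewrite !mxE => hxi; apply: h_cb.
have Sge : ((xi / 2 ^+ n)%:E <= S)%E.
  rewrite /S; case HS : (ereal_sup _) => [s| |]; last 2 first.
  - by rewrite leey.
  - exfalso; have : ((f b)%:E <= -oo)%E.
      rewrite -HS; apply: ereal_sup_ubound; exists b => //.
      apply/(supnorm_ltP _); first by rewrite mulr_gt0 // addr_gt0.
      by move=> i; rewrite !mxE; apply: h_bin.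
    by rewrite leNgt ltNye.
  have fs : forall x, cball b r0 x -> f x <= s.
    move=> x hx; rewrite -lee_fin -HS; apply: ereal_sup_ubound; exists x => //.
    exact: cb_sub.
  have cbl := dmeasure_cball_le f0 (ltW r00) fs.
  have h := le_trans xiLD (le_trans ld_le (lee_pmul (mu_ge0 _) _ cbl (lexx _))).
  move: h; rewrite -EFinM !lee_fin => h.
  rewrite ler_pdivrMr ?exprn_gt0 //.
  have r0n : 0 < r0 ^+ n by rewrite exprn_gt0.
  apply: le_trans (h _) _; first by rewrite invr_ge0 ltW.
  rewrite le_eqVlt; apply/orP; left; apply/eqP.
  rewrite -[r0 *+ 2]mulr_natr exprMn.
  move: r0n; set P := r0 ^+ _; set T := _ ^+ _ => r0n.
  by field; rewrite gt_eqF.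
have LQ : (L%:E <= mu Q)%E.
  apply: le_trans regy; rewrite /L EFinM.
  apply: lee_pmul => //; rewrite lee_fin ?mulr_ge0 ?exprn_ge0 ?divr_ge0 ?ltW //.
have sa : (mu [set x : 'rV[R]_n | forall i, (a ord0 i <= x ord0 i <= b ord0 i)%R] + mu Q <= mu Aplus)%E := dmeasure_add f0 Asub Qsub AQ.
have m'L : m' <= L by rewrite ge_min lexx.
have muA' : ((Mr - m')%:E < mu [set x : 'rV[R]_n | forall i, (a ord0 i <= x ord0 i <= b ord0 i)%R])%E := muA.
have eA := fineK (mu_fin [set x : 'rV[R]_n | forall i, a ord0 i <= x ord0 i <= b ord0 i]).
have eQ := fineK (mu_fin Q).
have eP := fineK (mu_fin Aplus).
move: muA' LQ sa muAplus; rewrite MrE -eA -eQ -eP.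
rewrite -EFinD !lte_fin !lee_fin => h1 h2 h3 h4.
exact: h_final h1 h2 h3 h4 m'L.
Qed.
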